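(* Let $p$ be a binary word with exactly one run. If $p=0$ or $p=1$, then $p$ has no internal zero at any $n\ge0$. If $p$ has length $l\ge2$, then $p$ has an internal zero at every $n\ge l+1$.
   Context: $c_p(w)$ is the number of occurrences of $p$ as a (not necessarily consecutive) subsequence of $w$; $B_{n,p}(k)$ is the number of binary words of length $n$ with $c_p(w)=k$. $p$ has an internal zero at $n$ if there exist $0\le k_1<k_2<k_3$ with $B_{n,p}(k_1)\ne0$, $B_{n,p}(k_2)=0$, $B_{n,p}(k_3)\ne0$. *)

(* Defs.v *)
From mathcomp Require Import all_boot.
Set Implicit Arguments. Unset Strict Implicit. Unset Printing Implicit Defensive.

(* Binary words are bit sequences (false = 0, true = 1). *)

(* c_p(w): number of occurrences of p as a (not necessarily consecutive)
   subsequence of w, i.e. the number of position sets (encoded as selection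
   masks m of length |w|) whose selected letters spell p. *)
Definition occ (p w : seq bool) : nat :=
  #|[set m : (size w).-tuple bool | mask m w == p]|.

Definition Bcount (n : nat) (p : seq bool) (k : nat) : nat :=
  #|[set w : n.-tuple bool | occ p w == k]|.

Definition internal_zero (p : seq bool) (n : nat) : Prop :=
  exists k1 k2 k3, [/\ k1 < k2, k2 < k3, Bcount n p k1 != 0,
                       Bcount n p k2 = 0 & Bcount n p k3 != 0].

Definition one_run (p : seq bool) : Prop :=
  exists (b : bool) (l : nat), 0 < l /\ p = nseq l b.

(* Main.v *)
Require Import Defs.
From mathcomp Require Import all_boot.
Set Implicit Arguments. Unset Strict Implicit. Unset Printing Implicit Defensive.

Lemma card_cons n (P : seq bool -> bool) :
  #|[set m : n.+1.-tuple bool | P m]| =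
  #|[set t : n.-tuple bool | P (true :: t)]| + #|[set t : n.-tuple bool | P (false :: t)]|.
Proof.
rewrite -(cardsID [set m : n.+1.-tuple bool | thead m]).
have inj b : injective (fun t : n.-tuple bool => [tuple of b :: t]).
  by move=> t1 t2 /(congr1 val) [] /val_inj.
congr (_ + _).
- rewrite -(card_imset _ (inj true)); apply: eq_card => m.
  case/tupleP: m => x t; rewrite !inE theadE /=; apply/idP/imsetP.
  + case/andP=> H1 H2; move: H1 H2; case: x => // H1 _; exists t; rewrite ?inE //.
  + by case=> t' Ht' /(congr1 val) [-> ->]; rewrite inE in Ht'; rewrite Ht'.
- rewrite -(card_imset _ (inj false)); apply: eq_card => m.
  case/tupleP: m => x t; rewrite !inE theadE /=; apply/idP/imsetP.
  + case: x => //= H; exists t; rewrite ?inE //.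
  + by case=> t' Ht' /(congr1 val) [-> ->]; rewrite inE in Ht'; rewrite Ht'.
Qed.

Fixpoint sc (p w : seq bool) : nat :=
  match w with
  | [::] => p == [::]
  | x :: w' => sc p w' + (if p is y :: p' then (x == y) * sc p' w' else 0)
  end.

Lemma occE p w : occ p w = sc p w.
Proof.
elim: w p => [|x w IH] p.
  rewrite /occ /=; case: p => [|y p].
    rewrite (eq_card (B := predT)) ?card_tuple //.
    by move=> m; rewrite inE /= mask0.
  by apply/eqP; rewrite cards_eq0; apply/eqP/setP => t; rewrite !inE mask0.
rewrite /occ /=.
rewrite (@card_cons (size w) (fun s => mask s (x :: w) == p)) /=.
rewrite -/(occ p w) IH addnC; congr (_ + _).
case: p => [|y p].
  by apply/eqP; rewrite cards_eq0; apply/eqP/setP => t; rewrite !inE.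
rewrite -IH /occ; case: eqP => [<-|ne] /=; rewrite ?mul1n ?mul0n.
  by apply: eq_card => t; rewrite !inE eqseq_cons eqxx.
by apply/eqP; rewrite cards_eq0; apply/eqP/setP => t; rewrite !inE eqseq_cons; case: eqP.
Qed.

Lemma sc_nil w : sc [::] w = 1.
Proof. by elim: w => //= x w ->. Qed.

Lemma sc_nseq b l w : sc (nseq l b) w = 'C(count_mem b w, l).
Proof.
elim: w l => [|x w IH] [|l] //=.
  by rewrite sc_nil addn0 bin0.
rewrite -[b :: nseq l b]/(nseq l.+1 b) !IH.
by case: (x == b); rewrite ?add1n ?binS ?mul1n ?mul0n ?addn0 ?add0n.
Qed.

Lemma occ_nseq b l w : occ (nseq l b) w = 'C(count_mem b w, l).
Proof. by rewrite occE sc_nseq. Qed.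

Lemma Bpos n p k : (exists w : n.-tuple bool, occ p w = k) -> Bcount n p k != 0.
Proof.
case=> w hw; rewrite /Bcount -lt0n; apply/card_gt0P; exists w; by rewrite inE hw.
Qed.

Lemma Bwit n p k : Bcount n p k != 0 -> exists w : n.-tuple bool, occ p w = k.
Proof.
rewrite /Bcount -lt0n => /card_gt0P [w]; rewrite inE => /eqP hw; by exists w.
Qed.

Lemma wit n b j : j <= n -> exists w : n.-tuple bool, count_mem b w = j.
Proof.
move=> hj.
have hs : size (nseq j b ++ nseq (n - j) (~~ b)) == n.
  by rewrite size_cat !size_nseq subnKC.
exists (Tuple hs) => /=.
rewrite count_cat !count_nseq /= eqxx mul1n.
by clear hs; case: b; rewrite /= mul0n addn0.
Qed.

Lemma bin_ne2 c l : 2 <= l -> 'C(c, l) != 2.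
Proof.
move=> hl; case: (ltngtP c l) => H.
- by rewrite bin_small.
- have := leq_bin2l l H; rewrite binSn => h.
  by apply/eqP => E; rewrite E in h; clear H E; move: h hl; case: l => // [[|l]].
- by rewrite H binn.
Qed.

Theorem mainTheorem13 (p : seq bool) :
  one_run p ->
  (size p = 1 -> forall n : nat, ~ internal_zero p n) /\
  (2 <= size p -> forall n : nat, size p + 1 <= n -> internal_zero p n).
Proof.
case=> b [l [l0 ->]]; rewrite size_nseq; split.
- move=> -> n [k1 [k2 [k3 [_ h23 _ h2 h3]]]].
  have [w hw] := Bwit h3.
  rewrite occ_nseq bin1 in hw.
  have hk : k2 <= n.
    apply: leq_trans (ltnW h23) _; rewrite -hw.
    by have := count_size (pred1 b) w; rewrite size_tuple.
  have [w2 hw2] := wit b hk.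
  suff : Bcount n (nseq 1 b) k2 != 0 by rewrite h2.
  apply: Bpos.
  by exists w2; rewrite occ_nseq bin1.
- move=> l2 n hn; exists 0, 2, l.+1; split => //.
  + apply: Bpos; have [w hw] := wit b (leq0n n).
    by exists w; rewrite occ_nseq hw bin_small.
  + apply/eqP; rewrite cards_eq0; apply/eqP/setP => w; rewrite !inE occ_nseq.
    by apply/negbTE/bin_ne2.
  + have hl : l.+1 <= n by rewrite -addn1.
    apply: Bpos; have [w hw] := wit b hl.
    by exists w; rewrite occ_nseq hw binSn.
Qed.
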